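(* For every $k\geq 2$, $q(G_k)=q(G'_k)=2$; moreover $q(G'_1)=2$. In particular, for each $k\ge 2$ there is a symmetric orthogonal matrix in $\mathcal{S}(G_k)$.
   Context: For a graph $G$ on $n$ vertices, $\mathcal{S}(G)$ is the set of real symmetric $n\times n$ matrices $A=[a_{ij}]$ with $a_{ij}\neq0$ for $i\ne j$ iff $\{i,j\}\in E(G)$ (diagonal unrestricted); $q(G)$ is the minimum number of distinct eigenvalues of a matrix in $\mathcal{S}(G)$. Double-ended candle: for $k\geq 2$, $G_k$ is the graph on $\{1,\dots,2k\}$ with levels $L_0=\{1\}$, $L_i=\{2i,2i+1\}$ ($1\le i\le k-1$), $L_k=\{2k\}$, where two vertices are adjacent iff they lie in consecutive levels. Single-ended candle: for $k\ge1$, $G'_k$ is the graph on $\{1,\dots,2k+1\}$ with levels $L_0=\{1\}$, $L_i=\{2i,2i+1\}$ ($1\le i\le k$), where vertices in consecutive levels are adjacent, additionally $2k$ and $2k+1$ are adjacent, and there are no other edges ($G'_1=K_3$). *)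

(* Defs.v *)
From HB Require Import structures.
From mathcomp Require Import all_boot all_order all_algebra.
From mathcomp Require Import Rstruct.
From Stdlib Require Rdefinitions.
Notation R := Rdefinitions.R.
Set Implicit Arguments. Unset Strict Implicit. Unset Printing Implicit Defensive.
Import Order.TTheory GRing.Theory Num.Theory.
Local Open Scope ring_scope.

(* Vertices 1..n of the paper are the ordinals 0..n-1 ('I_n): paper vertex v
   is ordinal v-1. *)

(* Level of the (0-based) vertex i: paper vertex v = i+1 lies in level
   floor(v/2) (L_0 = {1}, L_i = {2i,2i+1}, and the top vertex 2k in L_k). *)
Definition lvl (i : nat) : nat := (i.+1)./2.

Definition level_adj (n : nat) (i j : 'I_n) : bool :=
  (lvl i == (lvl j).+1) || (lvl j == (lvl i).+1).

Definition Gk (k : nat) : rel 'I_(2 * k) := fun i j => level_adj i j.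

Definition Gk' (k : nat) : rel 'I_(2 * k + 1) := fun i j =>
  level_adj i j
  || ((nat_of_ord i == (2 * k).-1)%N && (nat_of_ord j == 2 * k)%N)
  || ((nat_of_ord j == (2 * k).-1)%N && (nat_of_ord i == 2 * k)%N).

Definition inS (n : nat) (G : rel 'I_n) (A : 'M[R]_n) : Prop :=
  A^T = A /\ (forall i j : 'I_n, i != j -> (A i j != 0) = G i j).

Definition num_distinct_eig (n : nat) (A : 'M[R]_n) (m : nat) : Prop :=
  exists s : seq R, [/\ uniq s, size s = m & forall a : R, eigenvalue A a <-> a \in s].

Definition q_eq (n : nat) (G : rel 'I_n) (m : nat) : Prop :=
  (exists A : 'M[R]_n, inS G A /\ num_distinct_eig A m) /\
  (forall (A : 'M[R]_n) (m' : nat), inS G A -> num_distinct_eig A m' -> (m <= m')%N).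

Arguments Gk k : clear implicits.
Arguments Gk' k : clear implicits.

(* Main.v *)
Require Import Defs.
From HB Require Import structures.
From mathcomp Require Import all_boot all_order all_algebra.
From mathcomp Require Import Rstruct complex lra ring zify.
Import Order.TTheory GRing.Theory Num.Theory.
Local Open Scope ring_scope.
Set Implicit Arguments. Unset Strict Implicit. Unset Printing Implicit Defensive.
Arguments lvl : simpl never.

Section Lower.
Variable n : nat.
Variable A : 'M[R]_n.
Hypothesis symA : A^T = A.

Local Notation fC := (real_complex R).
Let B : 'M[R[i]]_n := map_mx fC A.

Lemma B_herm : B \is hermsymmx.
Proof.
apply: realsym_hermsym.
  apply/is_hermitianmxP; rewrite expr0 scale1r map_mx_id //.
  by rewrite /B map_trmx symA.
apply/mxOverP => i j; rewrite mxE; apply/complex_realP; by exists (A i j).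
Qed.

Lemma B_decomp : B = invmx (spectralmx B) *m diag_mx (spectral_diag B) *m spectralmx B.
Proof. by apply/orthomx_spectralP/hermitian_normalmx/B_herm. Qed.

Lemma B_eig (i : 'I_n) : eigenvalue B (spectral_diag B 0 i).
Proof.
apply/eigenvalueP; exists (row i (spectralmx B)).
  have HU := spectral_unit B.
  move: (B_decomp); set P := spectralmx B; set d := spectral_diag B => HB.
  rewrite -row_mul [in P *m B]HB !mulmxA mulmxV // mul1mx.
  by rewrite row_mul row_diag_mx -scalemxAl -rowE.
apply/negP => /eqP H.
have := spectral_unit B; rewrite -row_free_unit => /row_freeP [P HP].
have := congr1 (row i) HP; rewrite row_mul H mul0mx row1 => /rowP /(_ i).
rewrite !mxE => /esym/eqP; rewrite andTb eqxx; apply/negP; exact: (oner_neq0 (R[i] : nzRingType)).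
Qed.

Lemma A_eig (i : 'I_n) : eigenvalue A (complex.Re (spectral_diag B 0 i)).
Proof.
have Hr : spectral_diag B 0 i \is Num.real.
  by have /mxOverP := hermitian_spectral_diag_real B_herm; apply.
have := B_eig i; rewrite -(RRe_real Hr) !eigenvalue_root_char.
by rewrite /B -map_char_poly fmorph_root.
Qed.

End Lower.

Lemma lower_bound n (G : rel 'I_n) (A : 'M[R]_n) m :
  inS G A -> (exists i j : 'I_n, i != j /\ G i j) -> num_distinct_eig A m -> (2 <= m)%N.
Proof.
move=> [symA HG] [i [j [ij Gij]]] [s [us ss Hs]].
rewrite leqNgt; apply/negP => Hm.
pose B : 'M[R[i]]_n := map_mx (real_complex R) A.
pose d := spectral_diag B.
pose r0 := complex.Re (d 0 i).
have r0s : r0 \in s by apply/Hs; exact: A_eig.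
have all_r0 : forall x, x \in s -> x = r0.
  move: r0s; rewrite -ss in Hm; clear -Hm; case: s Hm => [|y t] //=.
  case: t => [|z t] //= _.
  by rewrite inE => /eqP H x; rewrite inE => /eqP ->.
have dc : diag_mx d = (r0%:C)%C%:M.
  apply/matrixP => a b; rewrite !mxE.
  have Hr : d 0 a \is Num.real.
    by have /mxOverP := hermitian_spectral_diag_real (B_herm symA); apply.
  have -> : d 0 a = (r0%:C)%C.
    by rewrite -(RRe_real Hr); congr (_%:C)%C; apply: all_r0; apply/Hs; exact: A_eig.
  by case: (a == b).
have HB : B = (r0%:C)%C%:M.
  rewrite [LHS](B_decomp symA) -/d dc mul_mx_scalar -scalemxAl mulVmx ?spectral_unit //.
  by rewrite scalemx1.
have : B i j = 0 by rewrite HB mxE (negbTE ij).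
rewrite mxE => /eqP; rewrite -(rmorph0 (real_complex R)) => /eqP /complexI /eqP.
by move=> H; move: (HG i j ij); rewrite H Gij.
Qed.

Lemma two_eig n (A : 'M[R]_n) :
  A *m A = 1%:M -> (exists i j : 'I_n, i != j /\ A i j != 0) -> num_distinct_eig A 2.
Proof.
move=> AA [i [j [ij Aij]]].
exists [:: (1:R); -1]; split => //.
  rewrite /= inE andbT; apply/negP => /eqP H; clear -H; lra.
move=> a; split.
  move/eigenvalueP => [v vA v0].
  have : v = (a ^+ 2) *: v by rewrite -[LHS]mulmx1 -AA mulmxA vA -scalemxAl vA scalerA expr2.
  move/eqP; rewrite -subr_eq0 -{1}(scale1r v) -scalerBl scaler_eq0 (negbTE v0) orbF.
  by rewrite subr_eq0 eq_sym sqrf_eq1 !inE.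
rewrite !inE => /orP [] /eqP ->; apply/eigenvalueP.
  exists (row i (A + 1%:M)).
    by rewrite -row_mul mulmxDl AA mul1mx scale1r addrC.
  apply/negP => /eqP /rowP /(_ j); rewrite !mxE (negbTE ij) addr0 => /eqP.
  by rewrite (negbTE Aij).
exists (row i (A - 1%:M)).
  by rewrite -row_mul mulmxBl AA mul1mx scaleN1r -linearN /= opprB.
apply/negP => /eqP /rowP /(_ j); rewrite !mxE (negbTE ij) subr0 => /eqP.
by rewrite (negbTE Aij).
Qed.

Lemma lvl_eq (m L : nat) : (lvl m == L) = ((0 < L)%N && (m == 2*L - 1)%N) || (m == 2 * L)%N.
Proof. rewrite /lvl; apply/eqP/orP; lia. Qed.

Lemma sum_ind (N a : nat) (F : nat -> R) :
  \sum_(m < N) (m == a :> nat)%:R * F m = (a < N)%N%:R * F a.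
Proof.
elim: N => [|N IH]; first by rewrite big_ord0 ltn0 mul0r.
rewrite big_ord_recr /= IH.
case: (ltngtP a N) => [lt|gt|->] /=.
- by rewrite (ltn_trans lt (ltnSn _)) mul0r addr0.
- by rewrite ltnS leqNgt gt /= !mul0r addr0.
- by rewrite ltnSn mul0r add0r.
Qed.

Lemma level_sum (N L : nat) (F : nat -> R) :
  \sum_(m < N) (lvl m == L)%:R * F m =
  (0 < L)%N%:R * ((2*L - 1 < N)%N%:R * F (2*L-1)%N) + (2*L < N)%N%:R * F (2*L)%N.
Proof.
have pw : forall m : 'I_N, (lvl m == L)%:R * F m =
   (0 < L)%N%:R * ((m == (2*L-1)%N :> nat)%:R * F m) + (m == (2*L)%N :> nat)%:R * F m.
  move=> m; rewrite lvl_eq.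
  case E1: (m == (2*L-1)%N :> nat); case E2: (m == (2*L)%N :> nat);
  case E3: (0 < L)%N => /=; rewrite ?mul0r ?mul1r ?addr0 ?add0r //.
  by move: E1 E2 E3 => /eqP E1 /eqP E2; lia.
rewrite (eq_bigr _ (fun m _ => pw m)) big_split /= -mulr_sumr !sum_ind.
by [].
Qed.

Ltac bs := rewrite /=; repeat progress rewrite ?mulr1n ?mulr0n ?mulr0 ?mul0r ?mulr1 ?mul1r ?addr0 ?add0r ?andbF ?andbT ?orbF ?orbT.

Lemma ind_XX (a b c : nat) : (c == a.+1)%:R * (c == b.+1)%:R = (a == b)%:R * (c == a.+1)%:R :> R.
Proof. by case: (eqVneq c a.+1) => [->|ne]; bs; rewrite ?eqSS. Qed.
Lemma ind_XY (a b c : nat) : (c == a.+1)%:R * (b == c.+1)%:R = (b == a.+2)%:R * (c == a.+1)%:R :> R.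
Proof. by case: (eqVneq c a.+1) => [->|ne]; bs. Qed.
Lemma ind_XZ (a c k : nat) : (c == a.+1)%:R * (c == k)%:R = (a.+1 == k)%:R * (c == k)%:R :> R.
Proof.
case: (eqVneq c a.+1) => [->|ne]; first by case: (a.+1 == k); bs.
case: (eqVneq c k) => [e|]; bs => //.
by move: ne; rewrite e eq_sym => /negbTE ->; bs.
Qed.
Lemma ind_YY (a b c : nat) : (a == c.+1)%:R * (b == c.+1)%:R =
   (a == b)%:R * (0 < a)%N%:R * (c == a.-1)%:R :> R.
Proof.
case: (eqVneq a c.+1) => [->|ne] /=; first by rewrite eqxx eq_sym; case: (c.+1 == b); bs.
case: (eqVneq a b) => [<-|]; bs => //.
case: (eqVneq c a.-1) => [e|]; bs => //.
by case: a ne e => [|a] /= ne e; bs => //; move: ne; rewrite e eqxx.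
Qed.
Lemma ind_YZ (a c k : nat) : (a == c.+1)%:R * (c == k)%:R = (a == k.+1)%:R * (c == k)%:R :> R.
Proof. by case: (eqVneq c k) => [->|ne]; bs. Qed.
Lemma ind_ZZ (c k : nat) : (c == k)%:R * (c == k)%:R = (c == k)%:R :> R.
Proof. by case: (c == k); bs. Qed.

Section Construct.
Variables (k : nat) (t : bool).

Definition sg (m : nat) : R := if odd m || (m == 0)%N then 1 else -1.
Definition rr : R := Num.sqrt (2^-1).
Definition nrm (L : nat) : R := if (L == 0)%N || (~~ t && (L == k)) then 1 else rr.
Definition cf (i : nat) : R := (t && (lvl i == k))%:R * sg i.
Definition hh (i m : nat) : R :=
  (lvl m == (lvl i).+1)%:R * sg i + (lvl i == (lvl m).+1)%:R * sg m
  + cf i * (lvl m == k)%:R * sg m.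
Definition Mf (i m : nat) : R := nrm (lvl i) * nrm (lvl m) * hh i m.

Lemma sg_sq m : sg m * sg m = 1.
Proof. by rewrite /sg; case: ifP; rewrite ?mulr1 ?mulrNN ?mulr1. Qed.

Lemma rr_sq : rr * rr = 2^-1.
Proof. by rewrite -expr2 sqr_sqrtr // invr_ge0 ler0n. Qed.

Lemma rr_gt0 : 0 < rr.
Proof. by rewrite sqrtr_gt0 invr_gt0 ltr0n. Qed.

Lemma hh_sym i m : hh i m = hh m i.
Proof.
rewrite /hh /cf; case: (eqVneq (lvl i) k) => [->|ne]; case: (eqVneq (lvl m) k) => [->|ne'];
  rewrite ?andbT ?andbF ?mul0r ?mulr0 ?mul0r /=; ring.
Qed.

Lemma PW (i j m : nat) : nrm (lvl m) ^+ 2 * (hh i m * hh j m) =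
    (lvl i == lvl j)%:R * sg i * sg j * ((lvl m == (lvl i).+1)%:R * nrm (lvl m) ^+ 2)
  + (lvl j == (lvl i).+2)%:R * sg i * ((lvl m == (lvl i).+1)%:R * nrm (lvl m) ^+ 2 * sg m)
  + ((lvl i).+1 == k)%:R * sg i * cf j * ((lvl m == k)%:R * nrm (lvl m) ^+ 2 * sg m)
  + (lvl i == (lvl j).+2)%:R * sg j * ((lvl m == (lvl j).+1)%:R * nrm (lvl m) ^+ 2 * sg m)
  + (lvl i == lvl j)%:R * (0 < lvl i)%N%:R * ((lvl m == (lvl i).-1)%:R * nrm (lvl m) ^+ 2)
  + (lvl i == k.+1)%:R * cf j * ((lvl m == k)%:R * nrm (lvl m) ^+ 2)
  + ((lvl j).+1 == k)%:R * cf i * sg j * ((lvl m == k)%:R * nrm (lvl m) ^+ 2 * sg m)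
  + (lvl j == k.+1)%:R * cf i * ((lvl m == k)%:R * nrm (lvl m) ^+ 2)
  + cf i * cf j * ((lvl m == k)%:R * nrm (lvl m) ^+ 2).
Proof.
rewrite /hh.
set a := lvl i; set b := lvl j; set c := lvl m.
set w := nrm c; set si := sg i; set sj := sg j; set sm := sg m.
set ci := cf i; set cj := cf j.
have sm2 : sm * sm = 1 by apply: sg_sq.
transitivity (w ^+ 2 * (
   (c == a.+1)%:R * (c == b.+1)%:R * si * sj
 + (c == a.+1)%:R * (b == c.+1)%:R * si * sm
 + (c == a.+1)%:R * (c == k)%:R * si * cj * sm
 + (a == c.+1)%:R * (c == b.+1)%:R * sm * sj
 + (a == c.+1)%:R * (b == c.+1)%:R * (sm * sm)
 + (a == c.+1)%:R * (c == k)%:R * cj * (sm * sm)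
 + (c == b.+1)%:R * (c == k)%:R * ci * sm * sj
 + (b == c.+1)%:R * (c == k)%:R * ci * (sm * sm)
 + (c == k)%:R * (c == k)%:R * ci * cj * (sm * sm))); first by ring.
rewrite sm2 ind_XX ind_XY ind_XZ ind_YY ind_YZ ind_ZZ.
rewrite !ind_YZ ind_XZ.


ring.
Qed.

Lemma nrm0 : nrm 0 = 1. Proof. by []. Qed.

Lemma nrm_pw (m L : nat) (F : nat -> R) :
  (lvl m == L)%:R * F (lvl m) = (lvl m == L)%:R * F L.
Proof. by case: eqP => [->|_] //; bs. Qed.

Variable n : nat.
Hypothesis hn : n = (2 * k + t)%N.
Hypothesis k0 : (0 < k)%N.

Lemma E0 (L : nat) : \sum_(m < n) (lvl m == L)%:R * nrm (lvl m) ^+ 2 = (L <= k)%N%:R.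
Proof.
rewrite (eq_bigr (fun m : 'I_n => (lvl m == L)%:R * nrm L ^+ 2)); last first.
  by move=> m _; apply: (nrm_pw m L (fun x => nrm x ^+ 2)).
rewrite (level_sum n L (fun _ => nrm L ^+ 2)).
rewrite /nrm; case: (posnP L) => [->|L0] /=.
  by rewrite (_ : (0 < n)%N = true) ?expr1n; bs => //; lia.
have r2 := rr_sq; rewrite -expr2 in r2.
case: (ltngtP L k) => [lt|gt|->].
- rewrite (_ : (2 * L - 1 < n)%N = true); last by lia.
  rewrite (_ : (2 * L < n)%N = true); last by lia.
  rewrite andbF r2; bs; by field.
- rewrite (_ : (2 * L - 1 < n)%N = false); last by lia.
  rewrite (_ : (2 * L < n)%N = false); last by lia.
  by bs.
- rewrite andbT (_ : (2 * k - 1 < n)%N = true); last by lia.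
  case: t hn => hn' /=.
  + rewrite (_ : (2 * k < n)%N = true); last by lia.
    rewrite r2; bs; by field.
  + rewrite (_ : (2 * k < n)%N = false); last by lia.
    by rewrite expr1n; bs.
Qed.

Lemma sg_odd L : (0 < L)%N -> sg (2 * L - 1) = 1.
Proof.
move=> L0; rewrite /sg (_ : (2 * L - 1 = (2 * L.-1).+1)%N); last by lia.
by rewrite /= oddM.
Qed.

Lemma sg_even L : (0 < L)%N -> sg (2 * L) = -1.
Proof.
move=> L0; rewrite /sg oddM /= (_ : (2 * L == 0)%N = false) //; lia.
Qed.

Lemma E1 (L : nat) : \sum_(m < n) (lvl m == L)%:R * nrm (lvl m) ^+ 2 * sg m =
   (L == 0)%N%:R + (~~ t && (L == k))%:R.
Proof.
rewrite (eq_bigr (fun m : 'I_n => (lvl m == L)%:R * (nrm L ^+ 2 * sg m))); last first.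
  by move=> m _; rewrite -mulrA; apply: (nrm_pw m L (fun x => nrm x ^+ 2 * sg m)).
rewrite (level_sum n L (fun m => nrm L ^+ 2 * sg m)).
rewrite /nrm; case: (posnP L) => [->|L0] /=.
  rewrite (_ : (0 < n)%N = true); last by lia.
  rewrite (_ : (0 == k)%N = false); last by lia.
  by rewrite andbF expr1n /sg /=; bs.
rewrite sg_odd // sg_even //.
case: (ltngtP L k) => [lt|gt|->].
- rewrite (_ : (2 * L - 1 < n)%N = true); last by lia.
  rewrite (_ : (2 * L < n)%N = true); last by lia.
  rewrite andbF; bs; ring.
- rewrite (_ : (2 * L - 1 < n)%N = false); last by lia.
  rewrite (_ : (2 * L < n)%N = false); last by lia.
  by rewrite andbF; bs.
- rewrite andbT (_ : (2 * k - 1 < n)%N = true); last by lia.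
  case: t hn => hn' /=.
  + rewrite (_ : (2 * k < n)%N = true); last by lia.
    bs; ring.
  + rewrite (_ : (2 * k < n)%N = false); last by lia.
    by rewrite expr1n; bs.
Qed.

Lemma SAME (i j L : nat) : lvl i = L -> lvl j = L -> (0 < L)%N ->
  sg i * sg j = if i == j then 1 else -1.
Proof.
move=> /eqP; rewrite lvl_eq => /orP [/andP [_ /eqP ->]|/eqP ->];
move=> /eqP; rewrite lvl_eq => /orP [/andP [_ /eqP ->]|/eqP ->] L0;
rewrite ?sg_odd ?sg_even ?eqxx //; bs; rewrite ?mulrNN ?mulr1 //;
by rewrite ifF //; apply/negP => /eqP; lia.
Qed.

Lemma FIN (i j : nat) : (i < n)%N -> (j < n)%N ->
  nrm (lvl i) * nrm (lvl j) * (
   (lvl i == lvl j)%:R * sg i * sg j * (lvl i < k)%N%:R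
 + (lvl j == (lvl i).+2)%:R * sg i * (((lvl i).+1 == 0)%N%:R + (~~ t && ((lvl i).+1 == k))%:R)
 + ((lvl i).+1 == k)%:R * sg i * cf j * ((k == 0)%N%:R + (~~ t && (k == k))%:R)
 + (lvl i == (lvl j).+2)%:R * sg j * (((lvl j).+1 == 0)%N%:R + (~~ t && ((lvl j).+1 == k))%:R)
 + (lvl i == lvl j)%:R * (0 < lvl i)%N%:R * ((lvl i).-1 <= k)%N%:R
 + (lvl i == k.+1)%:R * cf j * (k <= k)%N%:R
 + ((lvl j).+1 == k)%:R * cf i * sg j * ((k == 0)%N%:R + (~~ t && (k == k))%:R)
 + (lvl j == k.+1)%:R * cf i * (k <= k)%N%:R
 + cf i * cf j * (k <= k)%N%:R) = (i == j)%:R.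
Proof.
move=> iN jN.
have ak : (lvl i <= k)%N by rewrite /lvl; lia.
have bk : (lvl j <= k)%N by rewrite /lvl; lia.
have i0 : lvl i = 0%N -> i = 0%N by rewrite /lvl; lia.
have j0 : lvl j = 0%N -> j = 0%N by rewrite /lvl; lia.
have eqij : lvl i != lvl j -> (i == j) = false.
  by move=> ne; apply/negP => /eqP e; move: ne; rewrite e eqxx.
have r2 := rr_sq.
move: (SAME (i := i) (j := j)) => sm.
set a := lvl i in ak i0 eqij sm *; set b := lvl j in bk j0 eqij sm *.
rewrite leqnn eqxx (_ : (k == 0)%N = false); last by lia.
rewrite (_ : (a.+1 == 0)%N = false) // (_ : (b.+1 == 0)%N = false) //.
rewrite (_ : (a == k.+1) = false); last by lia.
rewrite (_ : (b == k.+1) = false); last by lia.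
rewrite (_ : (a.-1 <= k)%N = true); last by lia.
have ne2 : forall x y : nat, (x <= k)%N -> (y <= k)%N -> y = x.+2 -> (x.+1 == k) = false.
  by move=> x y xk yk e; apply/negP => /eqP; lia.
rewrite /cf /nrm -/a -/b; case: t hn => hn' /=; bs.
- case: (eqVneq a b) => [eab|nab]; last first.
    rewrite eqij //; bs.
    case: (eqVneq a k) => [eak|nak]; bs => //.
    by move: nab; rewrite eak eq_sym => /negbTE ->; bs.
  rewrite -eab in bk j0 sm *.
  case: (posnP a) => [a0|a0].
    rewrite (i0 a0) (j0 a0) a0 k0 (_ : (0 == k)%N = false); last by lia.
    by rewrite /sg /=; bs.
  case: (ltngtP a k) => [lt|gt|eak]; bs.
  + rewrite -mulrA (sm a) //; case: (i == j); bs; rewrite mulrA r2.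
      by field.
    by rewrite addNr mulr0.
  + lia.
  + rewrite (sm a) // r2; case: (i == j); bs.
      by field.
    by rewrite subrr mulr0.
- case: (eqVneq b a.+2) => [e|_].
    rewrite (ne2 a b) // (_ : (a == b) = false); last by lia.
    rewrite (_ : (a == b.+2) = false); last by lia.
    rewrite eqij; last by apply/negP => /eqP; lia.
    by bs.
  case: (eqVneq a b.+2) => [e|_].
    rewrite (ne2 b a) // (_ : (a == b) = false); last by lia.
    rewrite eqij; last by apply/negP => /eqP; lia.
    by bs.
  case: (eqVneq a b) => [eab|nab]; last first.
    by rewrite eqij //; bs.
  rewrite -eab in bk j0 sm *.
  case: (posnP a) => [a0|a0].
    by rewrite (i0 a0) (j0 a0) a0 k0 /sg /=; bs.
  case: (ltngtP a k) => [lt|gt|eak]; bs.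
  + rewrite -mulrA (sm a) //; case: (i == j); bs; rewrite mulrA r2.
      by field.
    by rewrite addNr mulr0.
  + lia.
  + have ij : i = j by move: iN jN; rewrite /a /lvl in eak eab *; rewrite /b /lvl in eab; lia.
    by rewrite ij eqxx; bs.
Qed.

Definition Mx : 'M[R]_n := \matrix_(i, j) Mf i j.

Lemma Mf_sym i m : Mf i m = Mf m i.
Proof. by rewrite /Mf hh_sym [nrm (lvl i) * _]mulrC. Qed.

Lemma MxMx : Mx *m Mx = 1%:M.
Proof.
apply/matrixP => i j; rewrite !mxE.
rewrite (eq_bigr (fun m : 'I_n => nrm (lvl i) * nrm (lvl j) * (nrm (lvl m) ^+ 2 * (hh i m * hh j m)))); last first.
  by move=> m _; rewrite !mxE [Mf m j]Mf_sym /Mf; ring.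
rewrite -mulr_sumr (eq_bigr _ (fun (m : 'I_n) _ => PW i j m)).
rewrite !big_split /= -!mulr_sumr !E0 !E1.
exact: FIN (ltn_ord i) (ltn_ord j).
Qed.

Lemma Mx_sym : Mx^T = Mx.
Proof. by apply/matrixP => i j; rewrite !mxE Mf_sym. Qed.

Lemma sg_nz m : sg m != 0.
Proof. by rewrite /sg; case: ifP => _; rewrite ?oppr_eq0 oner_eq0. Qed.

Lemma nrm_nz L : nrm L != 0.
Proof. by rewrite /nrm; case: ifP => _; rewrite ?oner_eq0 // gt_eqF // rr_gt0. Qed.

Lemma Mx_nz (i m : 'I_n) :
  (Mx i m != 0) = [|| lvl m == (lvl i).+1, lvl i == (lvl m).+1 |
                      t && (lvl i == k) && (lvl m == k)].
Proof.
rewrite mxE /Mf !mulf_eq0 !negb_or nrm_nz nrm_nz /= /hh /cf.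
have si := sg_nz i; have sm := sg_nz m.
case: (eqVneq (lvl m) (lvl i).+1) => [e|n1] /=.
  rewrite (_ : (lvl i == (lvl m).+1) = false); last by lia.
  have -> : (t && (lvl i == k))%:R * sg i * (lvl m == k)%:R = 0 :> R.
    case: (eqVneq (lvl m) k) => [emk|_]; last by bs.
    by rewrite (_ : (lvl i == k) = false) ?andbF; [bs|lia].
  by bs.
case: (eqVneq (lvl i) (lvl m).+1) => [e|n2] /=.
  have -> : (t && (lvl i == k))%:R * sg i * (lvl m == k)%:R = 0 :> R.
    case: (eqVneq (lvl m) k) => [emk|_]; last by bs.
    by rewrite (_ : (lvl i == k) = false) ?andbF; [bs|lia].
  by bs.
bs; case: t => /=; bs; rewrite ?eqxx //.
case: (lvl i == k); bs; rewrite ?eqxx //.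
case: (lvl m == k); bs; rewrite ?eqxx //.
by rewrite mulf_neq0.
Qed.

End Construct.

Lemma qeq_of n (G : rel 'I_n) (A : 'M[R]_n) :
  inS G A -> A *m A = 1%:M -> (exists i j : 'I_n, i != j /\ G i j) -> q_eq G 2.
Proof.
move=> HS AA E; split; last by move=> B m' HB HE; apply: (lower_bound HB E HE).
exists A; split => //; apply: two_eig => //.
case: E => i [j [ij Gij]]; exists i, j; split => //.
by case: HS => _ HG; rewrite HG.
Qed.

Lemma inS_Gk k : (0 < k)%N -> inS (Gk k) (Mx k false (2 * k)).
Proof.
move=> k0; split; first exact: Mx_sym.
move=> i j ij; rewrite Mx_nz /Gk /level_adj /= /lvl; lia.
Qed.

Lemma inS_Gk' k : (0 < k)%N -> inS (Gk' k) (Mx k true (2 * k + 1)).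
Proof.
move=> k0; split; first exact: Mx_sym.
move=> i j ij; rewrite Mx_nz // /Gk' /level_adj /=.
move: (ltn_ord i) (ltn_ord j) ij; rewrite /lvl -val_eqE /=; lia.
Qed.

Lemma edge_Gk k (k0 : (0 < k)%N) : exists i j : 'I_(2 * k), i != j /\ Gk k i j.
Proof.
have h0 : (0 < 2 * k)%N by lia.
have h1 : (1 < 2 * k)%N by lia.
by exists (Ordinal h0), (Ordinal h1); split => //; rewrite /Gk /level_adj /lvl.
Qed.

Lemma edge_Gk' k (k0 : (0 < k)%N) : exists i j : 'I_(2 * k + 1), i != j /\ Gk' k i j.
Proof.
have h0 : (0 < 2 * k + 1)%N by lia.
have h1 : (1 < 2 * k + 1)%N by lia.
by exists (Ordinal h0), (Ordinal h1); split => //; rewrite /Gk' /level_adj /lvl.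
Qed.

Lemma q_Gk k : (0 < k)%N -> q_eq (Gk k) 2.
Proof.
move=> k0; apply: (qeq_of (inS_Gk k0)) (edge_Gk k0).
by apply: MxMx => //; rewrite addn0.
Qed.

Lemma q_Gk' k : (0 < k)%N -> q_eq (Gk' k) 2.
Proof.
move=> k0; apply: (qeq_of (inS_Gk' k0)) (edge_Gk' k0).
by apply: MxMx.
Qed.

Theorem mainTheorem2 :
  (forall k : nat, (2 <= k)%N -> q_eq (Gk k) 2 /\ q_eq (Gk' k) 2) /\
  q_eq (Gk' 1) 2 /\
  (forall k : nat, (2 <= k)%N ->
     exists A : 'M[R]_(2 * k), inS (Gk k) A /\ A *m A^T = 1%:M).
Proof.
split; first by move=> k k2; split; [apply: q_Gk | apply: q_Gk']; lia.
split; first exact: q_Gk'.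
move=> k k2; have k0 : (0 < k)%N by lia.
exists (Mx k false (2 * k)); split; first exact: inS_Gk.
by rewrite Mx_sym; apply: MxMx => //; rewrite addn0.
Qed.
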